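(* Let $B$ be a connected building set on $[n]$. Then $$F(P_B)=\sum_{v}F(T_v),$$ where the sum runs over all vertices $v$ of the nestohedron $P_B$ and $T_v$ is the $B$-tree of $v$.
   Context: A building set on a finite set $V$ is a collection $B$ of nonempty subsets of $V$ such that $\{v\}\in B$ for all $v\in V$ and such that $I,J\in B$, $I\cap J\neq\emptyset$ imply $I\cup J\in B$; it is connected if $V\in B$. The nestohedron of $B$ is $P_B=\sum_{I\in B}\mathrm{Conv}\{e_i: i\in I\}\subset\mathbb{R}^V$. For a convex polytope $Q\subset\mathbb{R}^n$, $f:[n]\to\mathbb{N}=\{1,2,\dots\}$ is $Q$-generic if $x\mapsto\sum_i f(i)x_i$ attains its maximum over $Q$ at a unique point, and $F(Q)=\sum_{f\ Q\text{-generic}}x_{f(1)}\cdots x_{f(n)}$. For a connected building set $B$ on $[n]$, a nested set is a subcollection $N\subseteq B\setminus\{[n]\}$ such that (N1) any two members of $N$ are either comparable by inclusion or disjoint, and (N2) the union of any $p\ge2$ pairwise disjoint members of $N$ does not belong to $B$. The facets of $P_B$ are $F_I=P_B\cap\{x:\sum_{i\in I}x_i=|\{J\in B:J\subseteq I\}|\}$ for $I\in B\setminus\{[n]\}$, and $v\mapsto N_v=\{I: v\in F_I\}$ is a bijection from the vertices of $P_B$ to the maximal nested sets. For a vertex $v$ and $I\in N_v\cup\{[n]\}$, the set $I\setminus\bigcup\{J\in N_v:J\subsetneq I\}$ consists of a single element $i_I$, and $I\mapsto i_I$ is a bijection $N_v\cup\{[n]\}\to[n]$. The poset $P_v$ on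 $[n]$ is defined by $i_I\le i_J$ iff $I\subseteq J$; its Hasse diagram is a rooted tree $T_v$ (the $B$-tree of $v$) with root $i_{[n]}$. For a rooted tree $T$, a $T$-partition is a function $f$ from the vertices to $\mathbb{N}$ with $f(u)<f(w)$ whenever $w$ is the parent of $u$, and $F(T)=\sum_f\prod_u x_{f(u)}$ over all $T$-partitions. *)

(* Defs.v *)
From HB Require Import structures.
From mathcomp Require Import all_boot all_order all_algebra.
From Stdlib Require Import ClassicalEpsilon.
Set Implicit Arguments. Unset Strict Implicit. Unset Printing Implicit Defensive.
Import Order.TTheory GRing.Theory Num.Theory.
Local Open Scope ring_scope.

Definition asbool (P : Prop) : bool :=
  if excluded_middle_informative P then true else false.

Section Defs.
Variables (R : realFieldType) (n : nat).
Implicit Types (B : {set {set 'I_n}}) (x y v : {ffun 'I_n -> R}).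

Definition building_set B : Prop :=
  [/\ (forall I, I \in B -> I != set0),
      (forall i : 'I_n, [set i] \in B) &
      (forall I J, I \in B -> J \in B -> I :&: J != set0 -> I :|: J \in B)].

Definition connected_bs B : Prop := [set: 'I_n] \in B.

Definition in_simplex (I : {set 'I_n}) y : Prop :=
  [/\ (forall i, 0 <= y i), (forall i, i \notin I -> y i = 0) & \sum_i y i = 1].

Definition nestohedron B (x : {ffun 'I_n -> R}) : Prop :=
  exists y : {set 'I_n} -> {ffun 'I_n -> R},
    (forall I, I \in B -> in_simplex I (y I)) /\ x = \sum_(I in B) y I.

Definition lin (c : 'I_n -> R) x : R := \sum_i c i * x i.

Definition maximizer (Q : {ffun 'I_n -> R} -> Prop) (c : 'I_n -> R) x : Prop :=
  Q x /\ forall y, Q y -> lin c y <= lin c x.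

Definition generic (Q : {ffun 'I_n -> R} -> Prop) (f : 'I_n -> nat) : Prop :=
  (forall i, (0 < f i)%N) /\
  exists x, maximizer Q (fun i => (f i)%:R) x /\
            forall y, maximizer Q (fun i => (f i)%:R) y -> y = x.

Definition is_vertex (Q : {ffun 'I_n -> R} -> Prop) v : Prop :=
  exists c : 'I_n -> R, maximizer Q c v /\ forall y, maximizer Q c y -> y = v.

(* Coefficient of the monomial x_{m_1}...x_{m_k} (m as a multiset) in F(Q),
   restricted to functions with values <= N. *)
Definition coefF (Q : {ffun 'I_n -> R} -> Prop) (N : nat) (m : seq nat) : nat :=
  #|[set f : {ffun 'I_n -> 'I_N.+1} |
      asbool (generic Q (fun i => val (f i))) &&
      perm_eq [seq val (f i) | i <- enum 'I_n] m]|.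

(* N_v = { I in B \ {[n]} : v in F_I } *)
Definition nestedv B v : {set {set 'I_n}} :=
  [set I in B | (I != [set: 'I_n]) &&
     (\sum_(i in I) v i == (#|[set J in B | J \subset I]|)%:R)].

Definition nestedv' B v := nestedv B v :|: [set [set: 'I_n]].

Definition ielt B v (I : {set 'I_n}) : option 'I_n :=
  [pick i in I :\: \bigcup_(J in nestedv B v | J \proper I) J].

Definition lev B v (i j : 'I_n) : bool :=
  [exists I in nestedv' B v, exists J in nestedv' B v,
     [&& ielt B v I == Some i, ielt B v J == Some j & I \subset J]].

(* w covers u in P_v, i.e. w is the parent of u in the Hasse diagram T_v *)
Definition coverv B v (u w : 'I_n) : bool :=
  [&& u != w, lev B v u w &
      ~~ [exists z, [&& z != u, z != w, lev B v u z & lev B v z w]]].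

(* Coefficient of the monomial m in F(T_v), restricted to values <= N. *)
Definition coefT B v (N : nat) (m : seq nat) : nat :=
  #|[set g : {ffun 'I_n -> 'I_N.+1} |
      [forall i, (0 < val (g i))%N] &&
      [forall u, forall w, coverv B v u w ==> (val (g u) < val (g w))%N] &&
      perm_eq [seq val (g i) | i <- enum 'I_n] m]|.

End Defs.

(* Main.v *)
Require Import Defs.
From HB Require Import structures.
From mathcomp Require Import all_boot all_order all_algebra.
From Stdlib Require Import ClassicalEpsilon.
Import Order.TTheory GRing.Theory Num.Theory.
Set Implicit Arguments. Unset Strict Implicit. Unset Printing Implicit Defensive.

Lemma asboolP (P : Prop) : reflect P (asbool P).
Proof. rewrite /asbool; case: excluded_middle_informative => h; by constructor. Qed.

Section Geo.
Local Open Scope ring_scope.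
Variables (R : realFieldType) (n : nat) (B : {set {set 'I_n}}).
Hypothesis B0 : forall I, I \in B -> I != set0.
Variable i0 : 'I_n.

Definition ev (i : 'I_n) : {ffun 'I_n -> R} := [ffun k => ((k == i)%:R)].
Definition xh (h : {set 'I_n} -> 'I_n) : {ffun 'I_n -> R} := \sum_(I in B) ev (h I).
Definition isam (c : 'I_n -> R) (I : {set 'I_n}) i := (i \in I) && [forall j in I, c j <= c i].
Definition am c I := odflt i0 [pick i | isam c I i].
Definition UA c := forall I, I \in B -> forall i j, isam c I i -> isam c I j -> i = j.

Lemma am_ex c I : I != set0 -> exists i, isam c I i.
Proof.
case/set0Pn=> k kI.
case: (@arg_maxP _ _ _ k (mem I) c kI) => i iI H. exists i.
rewrite /isam; apply/andP; split => //; apply/forall_inP => j jI; exact: H.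
Qed.

Lemma isam_am c I : I \in B -> isam c I (am c I).
Proof.
move=> IB; rewrite /am; case: pickP => [i //|H].
case: (am_ex c (B0 IB)) => i hi. by rewrite H in hi.
Qed.

Lemma lin_ev c i : lin c (ev i) = c i.
Proof.
rewrite /lin (bigD1 i) //= big1 => [|j ji]; rewrite !ffunE ?eqxx ?mulr1 ?addr0 //.
by rewrite (negbTE ji) mulr0.
Qed.

Lemma lin_sum c (F : {set 'I_n} -> {ffun 'I_n -> R}) :
  lin c (\sum_(I in B) F I) = \sum_(I in B) lin c (F I).
Proof.
rewrite /lin. under eq_bigr => i _ do rewrite sum_ffunE mulr_sumr.
by rewrite exchange_big.
Qed.

Lemma lin_simplex c I y i : in_simplex I y -> isam c I i -> lin c y <= c i.
Proof.
case=> y0 yout y1 /andP[iI /forall_inP H].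
rewrite /lin -[c i]mulr1 -y1 mulr_sumr ler_sum // => j _.
case: (boolP (j \in I)) => jI.
- by rewrite [c i * _]mulrC [c j * _]mulrC ler_wpM2l // H.
- by rewrite yout // !mulr0.
Qed.

Lemma lin_simplex_eq c I y i : in_simplex I y -> i \in I ->
  (forall j, j \in I -> j != i -> c j < c i) -> lin c y = c i -> y = ev i.
Proof.
case=> y0 yout y1 iI H E.
have E2 : \sum_j (y j * (c i - c j)) = 0.
  under eq_bigr => j _ do rewrite mulrBr.
  rewrite sumrB -mulr_suml y1 mul1r -{1}E /lin.
  under eq_bigr => j _ do rewrite mulrC.
  by rewrite subrr.
have Z : forall j, j != i -> y j = 0.
  move=> j ji; case: (boolP (j \in I)) => jI; last exact: yout.
  have nn : forall k, predT k -> 0 <= y k * (c i - c k).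
    move=> k _; case: (boolP (k \in I)) => kI; last by rewrite yout // mul0r.
    case: (eqVneq k i) => [->|ki]; first by rewrite subrr mulr0.
    by rewrite mulr_ge0 // subr_ge0 ltW // H.
  have := psumr_eq0P nn E2 (i:=j) isT.
  move/eqP; rewrite mulf_eq0 subr_eq0 => /orP[/eqP //|/eqP cj].
  by have := H j jI ji; rewrite cj ltxx.
apply/ffunP => j; rewrite ffunE.
case: (eqVneq j i) => [->|ji]; last by rewrite Z.
rewrite -y1 (bigD1 i) //= big1 ?addr0 // => k ki; exact: Z.
Qed.

Lemma nesto_xh h : (forall I, I \in B -> h I \in I) -> @nestohedron R n B (xh h).
Proof.
move=> hI; exists (fun I => ev (h I)); split=> // I IB; split.
- by move=> k; rewrite ffunE ler0n.
- move=> k kI; rewrite ffunE; case: eqP => // E.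
  by rewrite E hI in kI.
- by rewrite (bigD1 (h I)) //= big1 ?ffunE ?eqxx ?addr0 // => k kh; rewrite ffunE (negbTE kh).
Qed.

Lemma max_xh c h : (forall I, I \in B -> isam c I (h I)) ->
  maximizer (@nestohedron R n B) c (xh h).
Proof.
move=> H; split.
  by apply: nesto_xh => I IB; case/andP: (H I IB).
move=> _ [y [yS ->]]. rewrite /xh !lin_sum ler_sum // => I IB.
rewrite lin_ev; exact: lin_simplex (yS I IB) (H I IB).
Qed.

Lemma UA_strict c I i j : UA c -> I \in B -> isam c I i -> j \in I -> j != i -> c j < c i.
Proof.
move=> U IB hi jI ji; move: (hi) => /andP[iI /forall_inP H].
rewrite lt_neqAle H // andbT; apply/negP=> /eqP E.
have hj : isam c I j by rewrite /isam jI; apply/forall_inP => k kI; rewrite E; exact: H.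
by rewrite (U I IB j i hj hi) eqxx in ji.
Qed.

Lemma UA_unique c y : UA c -> maximizer (@nestohedron R n B) c y -> y = xh (am c).
Proof.
move=> U [[z [zS ->]] ymax].
have M := max_xh (fun I IB => isam_am c IB).
have le := ymax _ M.1.
rewrite /xh !lin_sum in le.
have D : \sum_(I in B) (lin c (ev (am c I)) - lin c (z I)) = 0.
  apply/eqP; rewrite eq_le; apply/andP; split.
    by rewrite sumrB subr_le0.
  apply: sumr_ge0 => J JB; rewrite subr_ge0 lin_ev; exact: lin_simplex (zS J JB) (isam_am c JB).
rewrite /xh; apply: eq_bigr => I IB.
have nn : forall J, J \in B -> 0 <= lin c (ev (am c J)) - lin c (z J).
  move=> J JB; rewrite subr_ge0 lin_ev; exact: lin_simplex (zS J JB) (isam_am c JB).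
have := psumr_eq0P nn D IB.
move/eqP; rewrite subr_eq0 lin_ev => /eqP E.
apply: lin_simplex_eq (zS I IB) _ _ (esym E).
  by case/andP: (isam_am c IB).
move=> j jI ji; exact: UA_strict U IB (isam_am c IB) jI ji.
Qed.

Lemma uniq_UA c x : (forall y, maximizer (@nestohedron R n B) c y -> y = x) -> UA c.
Proof.
move=> U I IB i j hi hj; apply/eqP; apply/negPn/negP => ij.
pose h1 := fun J => if J == I then i else am c J.
pose h2 := fun J => if J == I then j else am c J.
have H1 : forall J, J \in B -> isam c J (h1 J).
  by move=> J JB; rewrite /h1; case: eqP => [->|]//; rewrite isam_am.
have H2 : forall J, J \in B -> isam c J (h2 J).
  by move=> J JB; rewrite /h2; case: eqP => [->|]//; rewrite isam_am.
have E : xh h1 = xh h2 by rewrite (U _ (max_xh H1)) (U _ (max_xh H2)).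
have := congr1 (fun x : {ffun 'I_n -> R} => x i) E => /=.
rewrite /xh !sum_ffunE (bigD1 I) //= [in RHS](bigD1 I) //=.
have -> : \sum_(J in B | J != I) ev (h2 J) i = \sum_(J in B | J != I) ev (h1 J) i.
  by apply: eq_bigr => J /andP[_ /negbTE JI]; rewrite /h1 /h2 JI.
move/addIr; rewrite /h1 /h2 eqxx !ffunE eqxx.
by rewrite (negbTE ij) => /eqP; rewrite oner_eq0.
Qed.

Lemma vertexP v : is_vertex (@nestohedron R n B) v <-> exists c, UA c /\ v = xh (am c).
Proof.
split.
  case=> c [M U]; exists c; have UA := uniq_UA U; split=> //.
  exact: UA_unique.
case=> c [U ->]; exists c; split.
  exact: max_xh (fun I IB => isam_am c IB).
move=> y; exact: UA_unique.
Qed.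

Lemma genericP (f : 'I_n -> nat) : generic (@nestohedron R n B) f <->
  (forall i, (0 < f i)%N) /\ UA (fun i => (f i)%:R).
Proof.
split.
  case=> pos [x [M U]]; split=> //; exact: uniq_UA U.
case=> pos U; split=> //; exists (xh (am (fun i => (f i)%:R))); split.
  exact: max_xh (fun I IB => isam_am _ IB).
move=> y; exact: UA_unique.
Qed.

End Geo.

Section Comb.
Local Open Scope ring_scope.
Variables (R : realFieldType) (n : nat) (B : {set {set 'I_n}}).
Hypothesis B0 : forall I, I \in B -> I != set0.
Hypothesis BU : forall I J, I \in B -> J \in B -> I :&: J != set0 -> I :|: J \in B.
Hypothesis B1 : forall i : 'I_n, [set i] \in B.
Hypothesis BT : [set: 'I_n] \in B.
Variable i0 : 'I_n.
Variable c : 'I_n -> R.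
Hypothesis Uc : UA B c.

Local Notation a := (am i0 c).
Local Notation v := (xh R B (am i0 c)).

Lemma aI I : I \in B -> a I \in I.
Proof. by move=> IB; case/andP: (isam_am B0 i0 c IB). Qed.

Lemma a_le I j : I \in B -> j \in I -> c j <= c (a I).
Proof. by move=> IB jI; case/andP: (isam_am B0 i0 c IB) => _ /forall_inP; apply. Qed.

Lemma a_eq I i : I \in B -> isam c I i -> a I = i.
Proof. by move=> IB hi; apply: (Uc IB (isam_am B0 i0 c IB) hi). Qed.

Lemma sum_ev (I : {set 'I_n}) (k : 'I_n) : \sum_(i in I) ev R k i = (k \in I)%:R.
Proof.
case: (boolP (k \in I)) => kI.
  rewrite (bigD1 k) //= big1 => [|i /andP[_ ik]]; rewrite ffunE ?eqxx ?addr0 //.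
  by rewrite (negbTE ik).
rewrite big1 // => i iI; rewrite ffunE; case: eqP => // E.
by rewrite -E iI in kI.
Qed.

Lemma sumv (I : {set 'I_n}) : \sum_(i in I) v i = (#|[set J in B | a J \in I]|)%:R.
Proof.
under eq_bigr => i _ do rewrite /xh sum_ffunE.
rewrite exchange_big /=.
under eq_bigr => J _ do rewrite sum_ev.
rewrite -natr_sum -sum1_card; congr (_%:R).
rewrite big_mkcond /= [RHS]big_mkcond /=; apply: eq_bigr => J _.
by rewrite inE; case: (J \in B); case: (a J \in I).
Qed.

Lemma closed_iff (I : {set 'I_n}) :
  (\sum_(i in I) v i == (#|[set J in B | J \subset I]|)%:R) =
  [forall J in B, (a J \in I) ==> (J \subset I)].
Proof.
rewrite sumv eqr_nat eq_sym.
have S : [set J in B | J \subset I] \subset [set J in B | a J \in I].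
  apply/subsetP => J; rewrite !inE => /andP[JB JI]; rewrite JB /=.
  exact: (subsetP JI) (aI JB).
rewrite (subset_leqif_cards S).2 eqEsubset S /=.
apply/subsetP/forall_inP => H J.
  move=> JB; apply/implyP => aJ.
  by have := H J; rewrite !inE JB aJ /= => /(_ isT).
by rewrite !inE => /andP[JB aJ]; rewrite JB /= (implyP (H J JB)).
Qed.

Definition closedb (I : {set 'I_n}) := (I \in B) && [forall J in B, (a J \in I) ==> (J \subset I)].

Lemma nested'_iff I : (I \in nestedv' B v) = closedb I.
Proof.
rewrite /nestedv' in_setU in_set1 /nestedv inE /closedb.
case: (eqVneq I setT) => [->|IT]; last by rewrite orbF /= closed_iff.
rewrite orbT BT /=; symmetry; apply/forall_inP => J _; by rewrite subsetT implybT.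
Qed.

Definition U i := [set i] :|: \bigcup_(J in B | a J == i) J.

Lemma U_B i : U i \in B.
Proof.
rewrite /U; apply: (big_rec (fun X => [set i] :|: X \in B)).
  by rewrite setU0 B1.
move=> J X /andP[JB /eqP aJ] HX; rewrite setUCA; apply: BU => //.
apply/set0Pn; exists i; rewrite !inE eqxx /= andbT.
by rewrite -aJ aI.
Qed.

Lemma iU i : i \in U i.
Proof. by rewrite !inE eqxx. Qed.

Lemma U_sub J i : J \in B -> a J = i -> J \subset U i.
Proof.
move=> JB aJ; apply: subset_trans (subsetUr _ _).
by apply: (bigcup_sup J); rewrite JB aJ eqxx.
Qed.

Lemma leU k i : k \in U i -> c k <= c i.
Proof.
rewrite !inE => /orP[/eqP->//|/bigcupP[J /andP[JB /eqP aJ] kJ]].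
by rewrite -aJ a_le.
Qed.

Lemma aU i : a (U i) = i.
Proof.
apply: a_eq (U_B i) _; rewrite /isam iU /=; apply/forall_inP => k kU; exact: leU.
Qed.

Lemma U_closed i : closedb (U i).
Proof.
rewrite /closedb U_B /=; apply/forall_inP => J JB; apply/implyP => aJU.
have JU : J :&: U i != set0 by apply/set0Pn; exists (a J); rewrite inE aI.
have KB := BU JB (U_B i) JU.
have aK : a (J :|: U i) = i.
  apply: a_eq KB _; rewrite /isam inE iU orbT /=; apply/forall_inP => k.
  rewrite inE => /orP[kJ|kU]; last exact: leU.
  exact: le_trans (a_le JB kJ) (leU aJU).
exact: subset_trans (subsetUl J (U i)) (U_sub KB aK).
Qed.

Lemma closed_U I : closedb I -> I = U (a I).
Proof.
move=> /andP[IB /forall_inP H]; apply/eqP; rewrite eqEsubset U_sub //=.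
by apply: (implyP (H _ (U_B (a I)))); rewrite aU aI.
Qed.

Lemma sub_U k j : k \in U j -> U k \subset U j.
Proof.
move=> kU; have := U_closed j; case/andP=> _ /forall_inP H.
by apply: (implyP (H _ (U_B k))); rewrite aU.
Qed.

Lemma U_inj i j : U i = U j -> i = j.
Proof. by move=> E; rewrite -(aU i) E aU. Qed.

Lemma nested_closed I : I \in nestedv B v -> closedb I.
Proof. by rewrite -nested'_iff in_setU => ->. Qed.

Lemma ielt_U i : ielt B v (U i) = Some i.
Proof.
have X : forall k, (k \in U i :\: \bigcup_(J in nestedv B v | J \proper U i) J) = (k == i).
  move=> k; rewrite in_setD; case: (eqVneq k i) => [->|ki].
    rewrite iU andbT; apply/bigcupP => -[J /andP[JN JP] iJ].
    have JC := nested_closed JN.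
    rewrite (closed_U JC) in JP iJ.
    move: JP; rewrite properE => /andP[_ /negP]; apply; exact: sub_U.
  apply/negP => /andP[/negP NB kU]; apply: NB; apply/bigcupP; exists (U k); last exact: iU.
  have Ukp : U k \proper U i.
    rewrite properE sub_U //=; apply/negP => H.
    have E : U k = U i by apply/eqP; rewrite eqEsubset sub_U.
    by rewrite (U_inj E) eqxx in ki.
  rewrite Ukp andbT /nestedv inE U_B /=.
  rewrite closed_iff; have := U_closed k; case/andP=> _ ->; rewrite andbT.
  apply/eqP => E; move: Ukp; rewrite properE E => /andP[_ /negP]; apply; exact: subsetT.
rewrite /ielt; case: pickP => [k|H]; first by rewrite X => /eqP ->.
by have := H i; rewrite X eqxx.
Qed.

Lemma lev_iff i j : lev B v i j = (i \in U j).
Proof.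
apply/idP/idP.
  case/existsP => I /andP[IN /existsP [J /andP[JN /and3P[/eqP Ii /eqP Jj IJ]]]].
  rewrite nested'_iff in IN; rewrite nested'_iff in JN.
  rewrite (closed_U IN) ielt_U in Ii; case: Ii => Ii.
  rewrite (closed_U JN) ielt_U in Jj; case: Jj => Jj.
  rewrite (closed_U IN) (closed_U JN) Ii Jj in IJ.
  exact: (subsetP IJ) i (iU i).
move=> ij; apply/existsP; exists (U i); rewrite nested'_iff U_closed /=.
apply/existsP; exists (U j); rewrite nested'_iff U_closed /= !ielt_U !eqxx /=.
exact: sub_U.
Qed.

Definition itv u w := [set z | (u \in U z) && (z \in U w)].
Lemma itvE u w y : (y \in itv u w) = (u \in U y) && (y \in U w).
Proof. by rewrite /itv in_set. Qed.

Lemma chain (g : 'I_n -> nat) : (forall u w, coverv B v u w -> (g u < g w)%N) ->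
  forall u w, u \in U w -> u != w -> (g u < g w)%N.
Proof.
move=> Hc.
suff H : forall k u w, (#|itv u w| <= k)%N ->
  u \in U w -> u != w -> (g u < g w)%N.
  by move=> u w; apply: H.
elim=> [|k IH] u w.
  rewrite leqn0 cards_eq0 => /eqP H uw _.
  have : u \in itv u w by rewrite itvE iU uw.
  by rewrite H inE.
move=> Hk uw nuw.
case Hcov: (coverv B v u w); first exact: Hc.
move: Hcov; rewrite /coverv nuw lev_iff uw /= => /negbFE /existsP [z /and4P[zu zw uz zw']].
rewrite !lev_iff in uz zw'.
have h1 : (g u < g z)%N.
  apply: (IH u z) uz _; last by rewrite eq_sym.
  rewrite -ltnS; apply: leq_trans Hk; apply: proper_card.
  rewrite properE; apply/andP; split.
    apply/subsetP => y; rewrite !itvE => /andP[-> yz] /=; exact: (subsetP (sub_U zw')).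
  apply/negP => /subsetP /(_ w); rewrite !itvE uw iU /= => /(_ isT) wz.
  have E : U z = U w by apply/eqP; rewrite eqEsubset !sub_U.
  by rewrite (U_inj E) eqxx in zw.
have h2 : (g z < g w)%N.
  apply: (IH z w) zw' zw.
  rewrite -ltnS; apply: leq_trans Hk; apply: proper_card.
  rewrite properE; apply/andP; split.
    apply/subsetP => y; rewrite !itvE => /andP[zy ->]; rewrite andbT.
    exact: (subsetP (sub_U zy)).
  apply/negP => /subsetP /(_ u); rewrite !itvE uw iU /= andbT => /(_ isT) zu'.
  have E : U z = U u by apply/eqP; rewrite eqEsubset !sub_U.
  by rewrite (U_inj E) eqxx in zu.
exact: ltn_trans h1 h2.
Qed.

Lemma Tpart_iff (g : 'I_n -> nat) :
  (forall u w, coverv B v u w -> (g u < g w)%N) <->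
  (forall I, I \in B -> forall j, j \in I -> j != a I -> (g j < g (a I))%N).
Proof.
split.
  move=> H I IB j jI ja; apply: chain H _ _ _ ja.
  exact: (subsetP (U_sub IB erefl)) _ jI.
move=> H u w /and3P[uw luw _]; rewrite lev_iff in luw.
have := H _ (U_B w) u luw; rewrite aU; exact.
Qed.

End Comb.

Section Final.
Local Open Scope ring_scope.
Variables (R : realFieldType) (n : nat) (B : {set {set 'I_n}}).
Hypothesis B0 : forall I, I \in B -> I != set0.
Hypothesis B1 : forall i : 'I_n, [set i] \in B.
Hypothesis BU : forall I J, I \in B -> J \in B -> I :&: J != set0 -> I :|: J \in B.
Hypothesis BT : [set: 'I_n] \in B.
Variable i0 : 'I_n.

Lemma key1 (c : 'I_n -> R) (g : 'I_n -> nat) : UA B c ->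
  (forall u w, coverv B (xh R B (am i0 c)) u w -> (g u < g w)%N) ->
  UA B (fun i => (g i)%:R : R) /\ xh R B (am i0 (fun i => (g i)%:R : R)) = xh R B (am i0 c).
Proof.
move=> Uc Hc.
have H := (Tpart_iff B0 BU B1 BT i0 Uc g).1 Hc.
have E : forall I, I \in B -> forall i, isam (fun i => (g i)%:R : R) I i -> i = am i0 c I.
  move=> I IB i /andP[iI /forall_inP Hi]; apply/eqP; apply/negPn/negP => ia.
  have lt := H I IB i iI ia.
  have := Hi _ (aI B0 i0 c IB); rewrite ler_nat => le.
  by rewrite leqNgt lt in le.
split.
  by move=> I IB i j hi hj; rewrite (E I IB i hi) (E I IB j hj).
rewrite /xh; apply: eq_bigr => I IB; congr ev; apply: (E I IB); apply: (isam_am B0 i0 (fun i => (g i)%:R : R) IB).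
Qed.

Lemma key2 (g : 'I_n -> nat) : UA B (fun i => (g i)%:R : R) ->
  forall u w, coverv B (xh R B (am i0 (fun i => (g i)%:R : R))) u w -> (g u < g w)%N.
Proof.
move=> Ug; apply: (Tpart_iff B0 BU B1 BT i0 Ug g).2 => I IB j jI ja.
have := UA_strict Ug IB (isam_am B0 i0 _ IB) jI ja.
by rewrite ltr_nat.
Qed.

End Final.

Lemma cardsum (T : finType) (P : T -> bool) : #|finset P| = (\sum_x (P x : nat))%N.
Proof.
rewrite -sum1_card big_mkcond /=; apply: eq_bigr => x _; rewrite inE; by case: (P x).
Qed.

Lemma sumb_count (T : Type) (s : seq T) (b : pred T) :
  (\sum_(v <- s) (b v : nat))%N = count b s.
Proof.
rewrite -sum1_count [RHS]big_mkcond /=; apply: eq_bigr => x _; by case: (b x).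
Qed.

Theorem mainTheorem6 (R : realFieldType) (n : nat) (B : {set {set 'I_n}}) :
  building_set B -> connected_bs B ->
  (exists vs : seq {ffun 'I_n -> R}, uniq vs /\
      forall v, v \in vs <-> is_vertex (@nestohedron R n B) v) /\
  (forall vs : seq {ffun 'I_n -> R}, uniq vs ->
      (forall v, v \in vs <-> is_vertex (@nestohedron R n B) v) ->
      forall (N : nat) (m : seq nat),
        coefF (@nestohedron R n B) N m = (\sum_(v <- vs) coefT B v N m)%N).
Proof.
move=> [B0 B1 BU] BT.
Local Open Scope ring_scope.
have := B0 _ BT; case/set0Pn => i0 _.
split.
  pose cand := [seq xh R B (fun I => h I) | h : {ffun {set 'I_n} -> 'I_n} <- enum {ffun {set 'I_n} -> 'I_n}].
  exists (undup [seq x <- cand | asbool (is_vertex (@nestohedron R n B) x)]).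
  split; first exact: undup_uniq.
  move=> v; rewrite mem_undup mem_filter; split.
    by case/andP=> /asboolP.
  move=> Vv; apply/andP; split; first by apply/asboolP.
  have [c [Uc ->]] := (vertexP B0 i0 v).1 Vv.
  apply/mapP; exists [ffun I => am i0 c I]; first by rewrite mem_enum.
  by rewrite /xh; apply: eq_bigr => I _; rewrite ffunE.
move=> vs Uvs Hvs N m.
rewrite /coefF /coefT; rewrite (cardsum (T := {ffun 'I_n -> 'I_N.+1})). 
under [RHS]eq_bigr => v _ do rewrite (cardsum (T := {ffun 'I_n -> 'I_N.+1})).
rewrite exchange_big /=; apply: eq_bigr => g _.
case: (boolP (perm_eq _ m)) => pm; last first.
  by rewrite andbF big1 // => v _; rewrite andbF.
rewrite andbT; under eq_bigr => v _ do rewrite andbT.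
rewrite sumb_count.
case: (asboolP (generic (@nestohedron R n B) (fun i => val (g i)))) => Gen.
  have [pos Ug] := (genericP R B0 i0 _).1 Gen.
  set x := xh R B (am i0 (fun i => (val (g i))%:R : R)).
  rewrite (@eq_in_count _ _ (pred1 x)).
    rewrite count_uniq_mem //.
    suff -> : x \in vs by [].
    apply/Hvs; apply/(vertexP B0 i0 x); by exists (fun i => (val (g i))%:R : R).
  move=> v vin /=.
  have [c [Uc Ev]] := (vertexP B0 i0 v).1 ((Hvs v).1 vin).
  apply/idP/eqP.
    case/andP=> _ /forallP T.
    have Hc : forall u w, coverv B v u w -> (val (g u) < val (g w))%N.
      by move=> u w cv; have := T u => /forallP /(_ w) /implyP; apply.
    rewrite Ev in Hc; have [_ E] := key1 B0 B1 BU BT Uc Hc.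
    by rewrite Ev -E.
  move=> ->; apply/andP; split; first by apply/forallP => i; exact: pos i.
  apply/forallP => u; apply/forallP => w; apply/implyP.
  exact: (key2 B0 B1 BU BT Ug).
rewrite (@eq_in_count _ _ pred0) ?count_pred0 //.
move=> v vin /=; apply/negbTE/negP => /andP[/forallP pos /forallP T].
apply: Gen; apply/(genericP R B0 i0); split => //.
have [c [Uc Ev]] := (vertexP B0 i0 v).1 ((Hvs v).1 vin).
have Hc : forall u w, coverv B v u w -> (val (g u) < val (g w))%N.
  by move=> u w cv; have := T u => /forallP /(_ w) /implyP; apply.
rewrite Ev in Hc; exact: (key1 B0 B1 BU BT Uc Hc).1.
Qed.
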